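(* Let $F=\frac1{16}\begin{pmatrix}1&2&1\\2&4&2\\1&2&1\end{pmatrix}$ (Gaussian blur filter). Then the equation $F*X=B$ with the zero boundary condition, for unknown $X\in\mathbb{R}^{m\times n}$, has a unique solution for every $B\in\mathbb{R}^{m\times n}$ (for all $m,n\in\mathbb{N}$).
   Context: For $F=[f_{ij}]\in\mathbb{R}^{3\times3}$ and $X=[x_{ij}]\in\mathbb{R}^{m\times n}$, the convolution $F*X\in\mathbb{R}^{m\times n}$ is defined by $[F*X]_{ij}=\sum_{l_1=1}^3\sum_{l_2=1}^3 f_{l_1l_2}\,x_{i-l_1+2,\,j-l_2+2}$ for $1\le i\le m$, $1\le j\le n$, where under the zero boundary condition all values $x_{ij}$ with $i\in\{0,m+1\}$ or $j\in\{0,n+1\}$ are $0$. *)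

(* Defs.v *)
From mathcomp Require Import all_boot all_order all_algebra.
From mathcomp Require Import Rstruct.
Set Implicit Arguments. Unset Strict Implicit. Unset Printing Implicit Defensive.
Import GRing.Theory Num.Theory.
Local Open Scope ring_scope.

Notation real := Rdefinitions.R.

(* Entry of X at (0-based, integer) position (a, b), with the zero boundary
   condition: 0 whenever the position lies outside the m x n grid. *)
Definition xz (m n : nat) (X : 'M[real]_(m, n)) (a b : int) : real :=
  match a, b with
  | Posz a', Posz b' =>
      match @insub nat (fun k => (k < m)%N) 'I_m a',
            @insub nat (fun k => (k < n)%N) 'I_n b' with
      | Some i, Some j => X i j
      | _, _ => 0
      end
  | _, _ => 0
  end.

(* Convolution with a 3x3 filter F (indices l1, l2 in {0,1,2} correspond to
   the paper's 1,2,3), zero boundary condition: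
   [F*X]_{ij} = sum_{l1,l2} f_{l1 l2} x_{i - l1 + 2, j - l2 + 2} (1-based),
   i.e. in 0-based indices x_{i + 1 - l1, j + 1 - l2}. *)
Definition conv (m n : nat) (F : 'M[real]_3) (X : 'M[real]_(m, n)) : 'M[real]_(m, n) :=
  \matrix_(i < m, j < n)
     \sum_(l1 < 3) \sum_(l2 < 3)
        F l1 l2 * xz X (Posz i + 1 - Posz l1) (Posz j + 1 - Posz l2).

Definition gauss_filter : 'M[real]_3 :=
  \matrix_(i < 3, j < 3)
    ((if i == 1 :> nat then 2 else 1) * (if j == 1 :> nat then 2 else 1)) / 16.

(* Main.v *)
Require Import Defs.
From HB Require Import structures.
From mathcomp Require Import all_boot all_order all_algebra.
From mathcomp Require Import Rstruct zify ring lra.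
Set Implicit Arguments. Unset Strict Implicit. Unset Printing Implicit Defensive.
Import Order.TTheory GRing.Theory Num.Theory.
Local Open Scope ring_scope.
Arguments xz : simpl never.

Definition uu (k : nat) : real := if k == 1%N then 2 else 1.

Lemma gf (i j : 'I_3) : gauss_filter i j = uu i * uu j / 16.
Proof.
have h16 : (16 : 'M[real]_3) = (16:real)%:M by rewrite raddfMn.
rewrite /gauss_filter h16.
have -> : ((16:real)%:M : 'M_3)^-1 = invmx (16%:M) by [].
by rewrite invmx_scalar -mulmxE mul_mx_scalar !mxE mulrC.
Qed.

Lemma sum3 (G : 'I_3 -> real) : \sum_(l < 3) G l =
  G (@Ordinal 3 0 isT) + G (@Ordinal 3 1 isT) + G (@Ordinal 3 2 isT).
Proof. by rewrite !big_ord_recr big_ord0 /= add0r; congr (G _ + G _ + G _); apply/val_inj. Qed.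

Definition RB m n (X : 'M[real]_(m,n)) (a b : int) : real :=
  xz X a (b + 1) + 2 * xz X a b + xz X a (b - 1).

Lemma conv_exp m n (X : 'M[real]_(m,n)) i j :
  conv gauss_filter X i j =
  (RB X (Posz i + 1) (Posz j) + 2 * RB X (Posz i) (Posz j) + RB X (Posz i - 1) (Posz j)) / 16.
Proof.
rewrite /conv /RB mxE sum3 !sum3 !gf /uu /=.
have e0 : forall z : int, z + 1 - 0%:Z = z + 1 by move=> z; rewrite subr0.
have e1 : forall z : int, z + 1 - 1%:Z = z by move=> z; rewrite addrK.
have e2 : forall z : int, z + 1 - 2%:Z = z - 1 by move=> z; lia.
rewrite !e0 !e1 !e2.
ring.
Qed.
Lemma xz_in m n (X : 'M[real]_(m,n)) (i : 'I_m) (j : 'I_n) :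
  xz X (Posz i) (Posz j) = X i j.
Proof.
by rewrite /xz /= !valK.

Qed.

Lemma xz_out_row m n (X : 'M[real]_(m,n)) a b :
  (a < 0) || (Posz m <= a) -> xz X a b = 0.
Proof.
case: a => [a|a] //= H; rewrite /xz.
case: b => // b. rewrite insubF //. apply/negbTE; rewrite -leqNgt. by move: H; rewrite lez_nat.
Qed.

Lemma xz_out_col m n (X : 'M[real]_(m,n)) a b :
  (b < 0) || (Posz n <= b) -> xz X a b = 0.
Proof.
case: b => [b|b] //= H; rewrite /xz; case: a => // a.
case: insub => // i. rewrite insubF //. apply/negbTE; rewrite -leqNgt. by move: H; rewrite lez_nat.
Qed.

Lemma oneD (k : nat) (f : int -> real) :
  (forall a, (a < 0) || (Posz k <= a) -> f a = 0) ->
  (forall j : nat, (j < k)%N -> f (Posz j - 1) + 2 * f (Posz j) + f (Posz j + 1) = 0) ->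
  forall a, f a = 0.
Proof.
move=> Hout Heq.
pose c (j : nat) := (-1) ^+ j * (j.+1)%:R * f 0.
have claim : forall j, (j.+1 <= k)%N -> f (Posz j) = c j /\ f (Posz j.+1) = c j.+1.
  elim=> [|j IH] Hj.
    have := Heq 0%N Hj.
    rewrite (_ : Posz 0 - 1 = -1) // (_ : Posz 0 + 1 = Posz 1) // Hout // => E.
    rewrite /c; split; first by rewrite expr0 mul1r mul1r.
    rewrite expr1; lra.
  have [IH1 IH2] := IH (ltnW Hj).
  split => //.
  have := Heq j.+1 Hj.
  rewrite (_ : Posz j.+1 - 1 = Posz j); last by lia.
  rewrite (_ : Posz j.+1 + 1 = Posz j.+2); last by lia.
  rewrite IH1 IH2 /c !exprS !mulrSr => E.
  lra.
move=> a.
case: k Hout Heq claim => [|k] Hout Heq claim.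
  by apply: Hout; case: a => a.
have [_ Hk] := claim k (leqnn _).
have g0 : f 0 = 0.
  move: Hk; rewrite Hout; last by rewrite lexx orbT.
  move/esym/eqP; rewrite /c !mulf_eq0 signr_eq0 pnatr_eq0 /= => /eqP //.
case: a => [j|j]; last by apply: Hout.
case: (ltnP j k.+1) => Hj.
  by have [-> _] := claim j Hj; rewrite /c g0 mulr0.
by apply: Hout; rewrite lez_nat Hj orbT.
Qed.

Lemma conv_inj m n (X : 'M[real]_(m,n)) : conv gauss_filter X = 0 -> X = 0.
Proof.
move=> H0.
have Hrow : forall (j : 'I_n) a, RB X a (Posz j) = 0.
  move=> j; apply: (oneD (k:=m)).
    by move=> a Ha; rewrite /RB !xz_out_row // mulr0 !addr0.
  move=> i Hi; have E : conv gauss_filter X (Ordinal Hi) j = 0 by rewrite H0 mxE.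
  rewrite conv_exp /= in E; lra.
apply/matrixP => i j; rewrite mxE -xz_in.
apply: (oneD (k:=n) (f := fun b => xz X (Posz i) b)).
  by move=> b Hb; exact: xz_out_col.
move=> j' Hj'; have := Hrow (Ordinal Hj') (Posz i); rewrite /RB /= => E; lra.
Qed.

Lemma xz_lin m n (a : real) (X Y : 'M[real]_(m,n)) u v :
  xz (a *: X + Y) u v = a * xz X u v + xz Y u v.
Proof.
rewrite /xz; case: u => [u|u]; last by rewrite mulr0 addr0.
case: v => [v|v]; last by rewrite mulr0 addr0.
case: insub => [i|]; last by rewrite mulr0 addr0.
case: insub => [j|]; last by rewrite mulr0 addr0.
by rewrite !mxE.
Qed.

Definition cg m n (X : 'M[real]_(m,n)) : 'M[real]_(m,n) := conv gauss_filter X.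

Lemma cg_lin m n : linear (@cg m n).
Proof.
move=> a X Y; apply/matrixP => i j.
rewrite /cg [LHS]conv_exp [in RHS]mxE [in RHS]mxE !conv_exp /RB !xz_lin; ring.
Qed.

HB.instance Definition _ m n :=
  GRing.isLinear.Build real 'M[real]_(m,n) 'M[real]_(m,n) *:%R (@cg m n) (@cg_lin m n).

Theorem corollary4 (m n : nat) (B : 'M[real]_(m, n)) :
  exists! X : 'M[real]_(m, n), conv gauss_filter X = B.
Proof.
pose L := lin_mx (@cg m n).
have Lu : L \in unitmx.
  rewrite -row_free_unit; apply: inj_row_free => v.
  rewrite -(vec_mxK v) mul_vec_lin => /eqP; rewrite mxvec_eq0 => /eqP /conv_inj ->.
  by rewrite linear0.
exists (vec_mx (mxvec B *m invmx L)); split.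
  apply: (can_inj (@mxvecK _ m n)).
  by rewrite -[conv _ _]/(cg _) -mul_vec_lin vec_mxK mulmxKV.
move=> Y HY.
by rewrite -HY -[conv _ _]/(cg _) -mul_vec_lin mulmxK // mxvecK.
Qed.
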